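(* Let $G=(V,E)$ be a connected graph on at least three vertices and let $E'$ be a minimum-size $(3,1)$-completion set of $G$. Then for every edge $e'\in E'$ there exists a triangle in $G\cup E'$ containing $e'$ such that at least one edge of this triangle is an edge of $G$ that is unsaturated in $G$.
   Context: A connected graph has a $(3,1)$-cover if each of its edges lies in at least one triangle. A set $E'\subseteq(V\times V)\setminus E$ of non-edges of $G$ is a $(3,1)$-completion set if $G\cup E'$ has a $(3,1)$-cover. An edge $e\in E$ is unsaturated in $G$ if it is contained in no triangle of $G$. *)

(* Defs.v *)
From mathcomp Require Import all_boot.
Set Implicit Arguments. Unset Strict Implicit. Unset Printing Implicit Defensive.

Definition simple_graph (T : finType) (g : rel T) : Prop :=
  symmetric g /\ irreflexive g.

Definition connected_graph (T : finType) (g : rel T) : Prop :=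
  forall x y : T, connect g x y.

Definition non_edge_set (T : finType) (g : rel T) (F : {set {set T}}) : Prop :=
  forall e, e \in F -> exists u v, [/\ u != v, e = [set u; v] & ~~ g u v].

Definition add_edges (T : finType) (g : rel T) (F : {set {set T}}) : rel T :=
  fun u v => g u v || ((u != v) && ([set u; v] \in F)).

Definition in_triangle (T : finType) (h : rel T) (u v : T) : Prop :=
  exists w : T, h u w && h v w.

Definition has_31_cover (T : finType) (h : rel T) : Prop :=
  forall u v : T, h u v -> in_triangle h u v.

Definition completion_set (T : finType) (g : rel T) (F : {set {set T}}) : Prop :=
  non_edge_set g F /\ has_31_cover (add_edges g F).

Definition min_completion_set (T : finType) (g : rel T) (F : {set {set T}}) : Prop :=
  completion_set g F /\ forall F', completion_set g F' -> #|F| <= #|F'|.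

Definition unsaturated (T : finType) (g : rel T) (u v : T) : Prop :=
  g u v /\ ~ in_triangle g u v.

(* Main.v *)
Require Import Defs.
From mathcomp Require Import all_boot.
Set Implicit Arguments. Unset Strict Implicit. Unset Printing Implicit Defensive.

Definition unsb (T : finType) (g : rel T) (x y : T) : bool :=
  g x y && ~~ [exists z, g x z && g y z].

Definition tri_uns (T : finType) (g : rel T) (x y z : T) : bool :=
  [|| unsb g x y, unsb g x z | unsb g y z].

Definition goodb (T : finType) (g : rel T) (F : {set {set T}}) (x y : T) : bool :=
  [exists z, [&& add_edges g F x z, add_edges g F y z & tri_uns g x y z]].

Definition Sset (T : finType) (g : rel T) (F : {set {set T}}) : {set {set T}} :=
  [set e in F | [exists u, exists v, (e == [set u; v]) && goodb g F u v]].

Lemma unsb_sym (T : finType) (g : rel T) x y : symmetric g -> unsb g x y = unsb g y x.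
Proof.
move=> sg; rewrite /unsb sg; congr (_ && ~~ _).
by apply/existsP/existsP => -[z /andP[a b]]; exists z; rewrite a b.
Qed.

Lemma add_edges_sym (T : finType) (g : rel T) F x y :
  symmetric g -> add_edges g F x y = add_edges g F y x.
Proof. by move=> sg; rewrite /add_edges sg eq_sym setUC. Qed.

Lemma set2_cases (T : finType) (u v a b : T) : u != v ->
  [set u; v] = [set a; b] -> (u = a /\ v = b) \/ (u = b /\ v = a).
Proof.
move=> nuv E.
have hu : u \in [set a; b] by rewrite -E !inE eqxx.
have hv : v \in [set a; b] by rewrite -E !inE eqxx orbT.
move: hu hv; rewrite !inE => /orP[] /eqP hu /orP[] /eqP hv; subst.
- by rewrite eqxx in nuv.
- by left.
- by right.
- by rewrite eqxx in nuv.
Qed.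

Lemma keyL (T : finType) (g : rel T) (F : {set {set T}}) x y z :
  symmetric g ->
  add_edges g F x y -> add_edges g F x z -> add_edges g F y z ->
  tri_uns g x y z -> add_edges g (Sset g F) x y.
Proof.
move=> sg hxy hxz hyz tu.
move: hxy; rewrite /add_edges => /orP[-> //|/andP[nxy inF]].
apply/orP; right; rewrite nxy /=.
rewrite /Sset inE inF /=; apply/existsP; exists x; apply/existsP; exists y.
rewrite eqxx /=; apply/existsP; exists z; by rewrite hxz hyz tu.
Qed.

Lemma addS_sub (T : finType) (g : rel T) (F : {set {set T}}) x y :
  add_edges g (Sset g F) x y -> add_edges g F x y.
Proof.
rewrite /add_edges => /orP[->//|/andP[-> ]].
by rewrite /Sset inE => /andP[-> _]; rewrite orbT.
Qed.

Theorem lemma11 (T : finType) (g : rel T) (F : {set {set T}}) :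
  simple_graph g -> connected_graph g -> 3 <= #|T| ->
  min_completion_set g F ->
  forall u v : T, [set u; v] \in F -> u != v ->
  exists w : T,
    [/\ add_edges g F u w, add_edges g F v w &
        [\/ unsaturated g u v, unsaturated g u w | unsaturated g v w]].
Proof.
move=> [sg ig] _ _ [[neF covF] minF] u v uvF nuv.
have tsym : forall x y z, tri_uns g x y z -> tri_uns g y x z /\ tri_uns g x z y.
  move=> x y z; rewrite /tri_uns (unsb_sym x y sg) (unsb_sym y z sg).
  by case: (unsb g y x); case: (unsb g x z); case: (unsb g z y).
have hsym := fun x y => add_edges_sym F x y sg.
have SsubF : Sset g F \subset F by apply/subsetP => e; rewrite inE => /andP[].
have compS : completion_set g (Sset g F).
  split.
    by move=> e eS; apply: neF; move/subsetP: SsubF; apply.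
  move=> a b hab.
  have habF := addS_sub hab.
  move: (hab); rewrite {1}/add_edges => /orP[gab|/andP[nab abS]].
  - case: (boolP [exists z, g a z && g b z]) => [/existsP[w /andP[aw bw]]|nt].
      by exists w; rewrite /add_edges aw bw.
    have uab : unsb g a b by rewrite /unsb gab nt.
    have [w /andP[aw bw]] := covF a b habF.
    exists w; apply/andP; split.
      apply: (keyL (z:=b) sg aw habF); first by rewrite hsym.
      by rewrite /tri_uns uab orbT.
    apply: (keyL (z:=a) sg bw); first by rewrite hsym.
      by rewrite hsym.
    by rewrite /tri_uns (unsb_sym b a sg) uab orbT.
  - move: abS; rewrite inE => /andP[_ /existsP[a' /existsP[b' /andP[/eqP E gd]]]].
    have gd' : goodb g F a b.
      case: (set2_cases nab E) => -[-> ->] //.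
      move: gd => /existsP[z /and3P[p q r]]; apply/existsP; exists z.
      by rewrite p q (tsym _ _ _ r).1.
    move: gd' => /existsP[w /and3P[aw bw tu]].
    exists w; apply/andP; split.
      apply: (keyL (z:=b) sg aw habF); first by rewrite hsym.
      by have [t1 t2] := tsym _ _ _ tu; exact: t2.
    apply: (keyL (z:=a) sg bw); first by rewrite hsym.
      by rewrite hsym.
    have [t1 _] := tsym _ _ _ tu; have [_ t3] := tsym _ _ _ t1; exact: t3.
have SF : Sset g F = F.
  apply/eqP; rewrite eqEcard SsubF /=; exact: minF.
have uvS : [set u; v] \in Sset g F by rewrite SF.
move: uvS; rewrite inE => /andP[_ /existsP[a' /existsP[b' /andP[/eqP E gd]]]].
have gd' : goodb g F u v.
  case: (set2_cases nuv E) => -[-> ->] //.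
  move: gd => /existsP[z /and3P[p q r]]; apply/existsP; exists z.
  by rewrite p q (tsym _ _ _ r).1.
move: gd' => /existsP[w /and3P[uw vw tu]].
exists w; split => //.
have cv : forall x y, unsb g x y -> unsaturated g x y.
  move=> x y /andP[gxy nt]; split => // -[z hz].
  by move/negP: nt; apply; apply/existsP; exists z.
by move: tu; rewrite /tri_uns => /or3P[h|h|h]; [constructor 1|constructor 2|constructor 3]; apply: cv.
Qed.
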